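(* Let $N,h\in\mathbb{N}$, let $\mathcal{T}$ be an $(N,h)$-regular rooted tree, let $\mathcal{S}\subset\mathcal{T}$ be a subtree, and let $1\le m\le N$ be an integer. Suppose that for every $(m,h)$-regular subtree $\mathcal{R}$ of $\mathcal{T}$, $\mathcal{S}_h\cap\mathcal{R}_h\neq\emptyset$. Then $\mathcal{S}$ has an $(N-m+1,h)$-regular subtree.
   Context: A rooted tree is a connected graph without cycles with a distinguished vertex (the root), identified with its vertex set. The height of a vertex is the length of the unique path from the root; for a rooted tree $\mathcal{T}$, $\mathcal{T}_n$ denotes the set of vertices of height $n$. A successor of a vertex $\tau'$ is a vertex adjacent to $\tau'$ of height one greater. A subtree of $\mathcal{T}$ means a subset of vertices containing the root and closed under taking predecessors. A finite rooted tree is $(N,h)$-regular if it has no vertices of height $h+1$ and every vertex of height less than $h$ has exactly $N$ successors. *)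

(* Defs.v *)
From mathcomp Require Import all_boot.
Set Implicit Arguments. Unset Strict Implicit. Unset Printing Implicit Defensive.

(* Model of the (N,h)-regular rooted tree T: vertices are words w : seq 'I_N
   of length <= h.  The root is [::], the successors of w are the words i :: w
   (i : 'I_N), hence the predecessor of a non-root vertex w is behead w and
   the height of w is size w.  Every (N,h)-regular rooted tree is isomorphic
   to this one. *)
Definition regtree (N h : nat) : pred (seq 'I_N) := fun w => size w <= h.

Definition is_subtree (N : nat) (A B : pred (seq 'I_N)) : Prop :=
  [/\ B [::], (forall w, B w -> A w) & (forall w, B w -> B (behead w))].

Definition regular (N : nat) (k h : nat) (B : pred (seq 'I_N)) : Prop :=
  (forall w, B w -> size w != h.+1) /\
  (forall w, B w -> size w < h -> #|[pred i : 'I_N | B (i :: w)]| = k).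
Arguments regtree : clear implicits.

(* Main.v *)
Require Import Defs.
From mathcomp Require Import all_boot zify.
Set Implicit Arguments. Unset Strict Implicit.

Section Gen.
Variables (N : nat) (P : pred (seq 'I_N)) (c h : nat).

Fixpoint Tf (w : seq 'I_N) : bool :=
  match w with
  | [::] => true
  | i :: w' => [&& Tf w', size w' < h &
                  i \in take c (enum [pred j : 'I_N | P (j :: w')])]
  end.

Lemma Tf_inv w : P [::] -> Tf w -> P w && (size w <= h).
Proof.
move=> P0; elim: w => [|i w IH] /=; first by rewrite P0.
case/and3P=> /IH /andP[_ _] lt /mem_take; rewrite mem_enum inE => ->.
exact: lt.
Qed.

Lemma Tf_card : P [::] ->
  (forall w, P w -> size w < h -> c <= #|[pred i : 'I_N | P (i :: w)]|) ->
  forall w, Tf w -> size w < h -> #|[pred i : 'I_N | Tf (i :: w)]| = c.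
Proof.
move=> P0 Hc w Tw lt.
have Pw := andP (Tf_inv P0 Tw).
rewrite (@eq_card _ _ (mem (take c (enum [pred j : 'I_N | P (j :: w)])))); last first.
  by move=> i; rewrite !inE /= Tw lt.
rewrite (card_uniqP _) ?take_uniq ?enum_uniq // size_takel // -cardE.
exact: Hc (proj1 Pw) lt.
Qed.

Lemma Tf_sub : P [::] -> is_subtree P Tf.
Proof.
move=> P0; split => //.
  by move=> w /(Tf_inv P0) /andP[].
by case=> [|i w] //= /and3P[].
Qed.

Lemma Tf_reg : P [::] ->
  (forall w, P w -> size w < h -> c <= #|[pred i : 'I_N | P (i :: w)]|) ->
  regular c h Tf.
Proof.
move=> P0 Hc; split; last exact: Tf_card.
move=> w /(Tf_inv P0) /andP[_ le]; by rewrite neq_ltn ltnS le.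
Qed.
End Gen.

Fixpoint goodf N (S : pred (seq 'I_N)) k (n : nat) (w : seq 'I_N) : bool :=
  match n with
  | 0 => S w
  | n.+1 => S w && (k <= #|[pred i : 'I_N | goodf S k n (i :: w)]|)
  end.

Lemma goodf_S N S k n w : @goodf N S k n w -> S w.
Proof. by case: n => //= n /andP[]. Qed.

Theorem lemma2p2 (N h m : nat) (S : pred (seq 'I_N)) :
  is_subtree (regtree N h) S ->
  1 <= m <= N ->
  (forall R : pred (seq 'I_N),
      is_subtree (regtree N h) R -> regular m h R ->
      exists w, [/\ size w = h, S w & R w]) ->
  exists Q : pred (seq 'I_N), is_subtree S Q /\ regular (N - m + 1) h Q.
Proof.
move=> [S0 Sreg Sb] /andP[m1 mN] HR.
set k := N - m + 1.
pose good w := goodf S k (h - size w) w.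
have goodS w : good w -> S w by apply: goodf_S.
have goodE w : size w < h -> good w =
    S w && (k <= #|[pred i : 'I_N | good (i :: w)]|).
  move=> lt; rewrite /good; case E: (h - size w) => [|n].
    by move/eqP: E; rewrite subn_eq0 leqNgt lt.
  rewrite /=; congr (_ && (_ <= _)); apply: eq_card => i; rewrite !inE /=.
  by have -> : h - (size w).+1 = n by rewrite subnS E.
case G0: (good [::]).
  exists (Tf good k h); split.
    case: (Tf_sub k h G0) => T0 Tsub Tb; split => // w /Tsub; exact: goodS.
  apply: Tf_reg => // w gw lt; move: gw; rewrite goodE // => /andP[] //.
pose bad w := ~~ good w.
have B0 : bad [::] by rewrite /bad G0.
have Hb : forall w, bad w -> size w < h -> m <= #|[pred i : 'I_N | bad (i :: w)]|.
  move=> w bw lt; move: bw; rewrite /bad goodE //.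
  have hC := cardC [pred i : 'I_N | good (i :: w)]; rewrite card_ord in hC.
  have -> : #|[pred i : 'I_N | bad (i :: w)]| = #|[predC [pred i : 'I_N | good (i :: w)]]|.
    by apply: eq_card => i; rewrite !inE.
  case Sw: (S w) => /=.
    rewrite -ltnNge /k => hlt; move: hC hlt; set a := #|_|; set b := #|_| => hC hlt. lia.
  move=> _; suff a0 : #|[pred i : 'I_N | good (i :: w)]| = 0.
    by move: hC; rewrite a0 add0n => ->.
  apply: eq_card0 => i; rewrite !inE /=.
  by apply/negbTE/negP => /goodS /Sb /=; rewrite Sw.
case: (HR (Tf bad m h)).
- case: (Tf_sub m h B0) => T0 Tsub Tb; split => // w /(Tf_inv B0) /andP[_].
  by [].
- exact: Tf_reg.
move=> w [sw Sw /(Tf_inv B0) /andP[bw _]].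
by move: bw; rewrite /bad /good sw subnn /= Sw.
Qed.
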